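(* Assume $T_B\colon\mathcal D(T_B)\to Y_B$ is bijective, and let $P_n\colon X\to X(n)$ be the projection associated to the decomposition $X=X(n)\oplus Z(n)$ (so $\ker P_n=Z(n)$). Then for each $n\in\mathbb Z$ the operator $A_n|_{\ker P_n}\colon\ker P_n\to\ker P_{n+1}$ is invertible (bijective).
   Context: $B$ is an admissible Banach sequence space: a complete normed space $B$ of real sequences $(s_n)_{n\in\mathbb Z}$ such that $\mathbf{s}'\in B$, $|s_n|\le|s'_n|$ for all $n$ imply $\mathbf{s}\in B$, $\|\mathbf{s}\|_B\le\|\mathbf{s}'\|_B$; $\chi_{\{n\}}\in B$ with $\|\chi_{\{n\}}\|_B>0$ for all $n$; and shifts $(s_{n+m})_n$ of elements of $B$ are in $B$ with norm at most $N\|\mathbf{s}\|_B$ for a fixed $N>0$. $X$ is a Banach space with norms $\|\cdot\|_n$ ($n\in\mathbb Z$) each equivalent to its norm; $(A_m)_{m\in\mathbb Z}$ are bounded linear operators on $X$. $Y_B$ is the Banach space of sequences $\mathbf{x}=(x_n)_{n\in\mathbb Z}$ in $X$ with $(\|x_n\|_n)_n\in B$, normed by $\|(\|x_n\|_n)_n\|_B$; $(T_B\mathbf{x})_n=x_n-A_{n-1}x_{n-1}$ on $\mathcal D(T_B)=\{\mathbf{x}\in Y_B:T_B\mathbf{x}\in Y_B\}$. For $n\in\mathbb Z$, $X(n)$ is the set of $x\in X$ for which there is $\mathbf{x}=(x_m)_m\in Y_B$ with $x_n=x$ and $x_m=A_{m-1}x_{m-1}$ for all $m>n$; $Z(n)$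 is the set of $x\in X$ for which there is $\mathbf{z}=(z_m)_m\in Y_B$ with $z_n=x$ and $z_m=A_{m-1}z_{m-1}$ for all $m\le n$. When $T_B$ is bijective, $X=X(n)\oplus Z(n)$ for every $n$. *)

(* Defs.v *)
From Stdlib Require Import Reals ZArith.
Open Scope R_scope.

Definition is_vector_space {X : Type} (zero : X) (add : X -> X -> X)
  (opp : X -> X) (scal : R -> X -> X) : Prop :=
  (forall x y z, add x (add y z) = add (add x y) z) /\
  (forall x y, add x y = add y x) /\
  (forall x, add x zero = x) /\
  (forall x, add x (opp x) = zero) /\
  (forall a b x, scal a (scal b x) = scal (a * b) x) /\
  (forall x, scal 1 x = x) /\
  (forall a x y, scal a (add x y) = add (scal a x) (scal a y)) /\
  (forall a b x, scal (a + b) x = add (scal a x) (scal b x)).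

Definition is_norm {X : Type} (zero : X) (add : X -> X -> X)
  (scal : R -> X -> X) (nrm : X -> R) : Prop :=
  (forall x, 0 <= nrm x) /\
  (forall x, nrm x = 0 -> x = zero) /\
  (forall a x, nrm (scal a x) = Rabs a * nrm x) /\
  (forall x y, nrm (add x y) <= nrm x + nrm y).

Definition is_complete {X : Type} (add : X -> X -> X) (opp : X -> X)
  (nrm : X -> R) : Prop :=
  forall u : nat -> X,
    (forall eps, 0 < eps -> exists N, forall p q, (N <= p)%nat -> (N <= q)%nat ->
        nrm (add (u p) (opp (u q))) < eps) ->
    exists l, forall eps, 0 < eps -> exists N, forall p, (N <= p)%nat ->
        nrm (add (u p) (opp l)) < eps.

Definition is_banach {X : Type} (zero : X) (add : X -> X -> X) (opp : X -> X)
  (scal : R -> X -> X) (nrm : X -> R) : Prop :=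
  is_vector_space zero add opp scal /\ is_norm zero add scal nrm /\
  is_complete add opp nrm.

Definition equiv_norms {X : Type} (n1 n2 : X -> R) : Prop :=
  exists c C, 0 < c /\ 0 < C /\ forall x, c * n1 x <= n2 x /\ n2 x <= C * n1 x.

Definition is_bounded_linear {X : Type} (add : X -> X -> X)
  (scal : R -> X -> X) (nrm : X -> R) (A : X -> X) : Prop :=
  (forall x y, A (add x y) = add (A x) (A y)) /\
  (forall a x, A (scal a x) = scal a (A x)) /\
  (exists C, forall x, nrm (A x) <= C * nrm x).

(* B is the set {s : Z -> R | inB s} with norm normB (pointwise operations). *)
Definition chi (n : Z) : Z -> R := fun m => if Z.eq_dec m n then 1 else 0.

Definition is_banach_seq_space (inB : (Z -> R) -> Prop) (normB : (Z -> R) -> R) : Prop :=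
  inB (fun _ => 0) /\
  (forall s t, inB s -> inB t -> inB (fun n => s n + t n)) /\
  (forall a s, inB s -> inB (fun n => a * s n)) /\
  (forall s, inB s -> 0 <= normB s) /\
  (forall s, inB s -> normB s = 0 -> forall n, s n = 0) /\
  (forall a s, inB s -> normB (fun n => a * s n) = Rabs a * normB s) /\
  (forall s t, inB s -> inB t -> normB (fun n => s n + t n) <= normB s + normB t) /\
  (forall u : nat -> Z -> R, (forall k, inB (u k)) ->
    (forall eps, 0 < eps -> exists N, forall p q, (N <= p)%nat -> (N <= q)%nat ->
        normB (fun n => u p n - u q n) < eps) ->
    exists l, inB l /\ forall eps, 0 < eps -> exists N, forall p, (N <= p)%nat ->
        normB (fun n => u p n - l n) < eps).

Definition is_admissible (inB : (Z -> R) -> Prop) (normB : (Z -> R) -> R) : Prop :=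
  is_banach_seq_space inB normB /\
  (forall s s', inB s' -> (forall n, Rabs (s n) <= Rabs (s' n)) ->
     inB s /\ normB s <= normB s') /\
  (forall n, inB (chi n) /\ 0 < normB (chi n)) /\
  (exists N, 0 < N /\ forall s m, inB s ->
     inB (fun n => s (n + m)%Z) /\ normB (fun n => s (n + m)%Z) <= N * normB s).

Section Seq.
Context {X : Type} (add : X -> X -> X) (opp : X -> X)
  (nrms : Z -> X -> R) (A : Z -> X -> X) (inB : (Z -> R) -> Prop).

Definition inYB (x : Z -> X) : Prop := inB (fun n => nrms n (x n)).

Definition TB (x : Z -> X) : Z -> X :=
  fun n => add (x n) (opp (A (n - 1)%Z (x (n - 1)%Z))).

Definition inDomTB (x : Z -> X) : Prop := inYB x /\ inYB (TB x).

Definition TB_bijective : Prop :=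
  (forall x1 x2, inDomTB x1 -> inDomTB x2 -> (forall n, TB x1 n = TB x2 n) ->
     forall n, x1 n = x2 n) /\
  (forall y, inYB y -> exists x, inDomTB x /\ forall n, TB x n = y n).

Definition Xn (n : Z) (x : X) : Prop :=
  exists xs, inYB xs /\ xs n = x /\
    forall m, (n < m)%Z -> xs m = A (m - 1)%Z (xs (m - 1)%Z).

Definition Zn (n : Z) (x : X) : Prop :=
  exists zs, inYB zs /\ zs n = x /\
    forall m, (m <= n)%Z -> zs m = A (m - 1)%Z (zs (m - 1)%Z).
End Seq.

(* Main.v *)
Require Import Defs.
From Stdlib Require Import Reals ZArith.
From Stdlib Require Import Lra Lia.
Open Scope R_scope.

Theorem lemma3p7
  (X : Type) (zero : X) (add : X -> X -> X) (opp : X -> X) (scal : R -> X -> X)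
  (nrm : X -> R) (nrms : Z -> X -> R) (A : Z -> X -> X)
  (inB : (Z -> R) -> Prop) (normB : (Z -> R) -> R)
  (hX : is_banach zero add opp scal nrm)
  (hnrms : forall n, is_norm zero add scal (nrms n) /\ equiv_norms nrm (nrms n))
  (hA : forall m, is_bounded_linear add scal nrm (A m))
  (hB : is_admissible inB normB)
  (hT : TB_bijective add opp nrms A inB) :
  forall n : Z,
    (forall x, Zn nrms A inB n x -> Zn nrms A inB (n + 1)%Z (A n x)) /\
    (forall x y, Zn nrms A inB n x -> Zn nrms A inB n y -> A n x = A n y -> x = y) /\
    (forall y, Zn nrms A inB (n + 1)%Z y -> exists x, Zn nrms A inB n x /\ A n x = y).
Proof.
  intro n.
  destruct hX as [[hassoc [hcomm [hz [hopp [hsm [h1 [hdist1 hdist2]]]]]]] _].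
  destruct hB as [[h0 [hadd [hscal _]]] [hdom [hchi _]]].
  assert (scal0 : forall v, scal 0 v = zero).
  { intro v. set (u := scal 0 v).
    assert (Hu : u = add u u) by (unfold u; rewrite <- hdist2; f_equal; ring).
    transitivity (add (add u u) (opp u)).
    { rewrite <- hassoc, hopp, hz. reflexivity. }
    rewrite <- Hu. apply hopp. }
  assert (nrms0 : forall k, nrms k zero = 0).
  { intro k. destruct (hnrms k) as [[_ [_ [hn3 _]]] _].
    rewrite <- (scal0 zero), hn3, Rabs_R0. ring. }
  assert (npos : forall k v, 0 <= nrms k v).
  { intros k v. destruct (hnrms k) as [[hn1 _] _]. apply hn1. }
  assert (A0 : forall k, A k zero = zero).
  { intro k. destruct (hA k) as [_ [hAs _]].
    transitivity (A k (scal 0 zero)); [rewrite scal0; reflexivity|].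
    rewrite hAs. apply scal0. }
  split; [|split].
  - intros x [zs [Hin [Hzn Hzs]]].
    exists (fun m => if Z.eq_dec m (n+1) then A n x else zs m).
    split; [|split].
    + unfold inYB.
      set (c := nrms (n+1)%Z (A n x)).
      assert (HB : inB (fun m => nrms m (zs m) + c * chi (n+1) m)).
      { apply hadd; [exact Hin|]. apply hscal. apply hchi. }
      apply (fun H => proj1 (hdom _ _ HB H)).
      intro m. unfold chi.
      destruct (Z.eq_dec m (n+1)) as [->|Hne].
      * assert (0 <= c) by apply npos.
        pose proof (npos (n+1)%Z (zs (n+1)%Z)).
        rewrite !Rabs_pos_eq; unfold c in *; lra.
      * pose proof (npos m (zs m)).
        rewrite !Rabs_pos_eq; lra.
    + destruct (Z.eq_dec (n+1) (n+1)); [reflexivity|lia].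
    + intros m Hm.
      destruct (Z.eq_dec m (n+1)) as [->|Hne].
      * replace (n+1-1)%Z with n by ring.
        destruct (Z.eq_dec n (n+1)); [lia|]. rewrite Hzn. reflexivity.
      * destruct (Z.eq_dec (m-1) (n+1)); [lia|]. apply Hzs. lia.
  - intros x y [zx [Hinx [Hzx Hsx]]] [zy [Hiny [Hzy Hsy]]] HA.
    set (x1 := fun m => if Z_le_dec m n then zx m else zero).
    set (x2 := fun m => if Z_le_dec m n then zy m else zero).
    assert (Hdom : forall zs v, inYB nrms inB zs -> zs n = v ->
       (forall m, (m <= n)%Z -> zs m = A (m - 1)%Z (zs (m - 1)%Z)) ->
       inDomTB add opp nrms A inB (fun m => if Z_le_dec m n then zs m else zero)).
    { intros zs v Hin Hz Hs. split.
      - unfold inYB. apply (fun H => proj1 (hdom _ _ Hin H)). intro m.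
        destruct (Z_le_dec m n).
        + lra.
        + rewrite nrms0, Rabs_R0. apply Rabs_pos.
      - unfold inYB.
        set (c := nrms (n+1)%Z (TB add opp A (fun m => if Z_le_dec m n then zs m else zero) (n+1)%Z)).
        assert (HB : inB (fun m => c * chi (n+1) m)) by (apply hscal; apply hchi).
        apply (fun H => proj1 (hdom _ _ HB H)). intro m. unfold chi.
        destruct (Z.eq_dec m (n+1)) as [->|Hne].
        + rewrite Rmult_1_r. unfold c. apply Rle_refl.
        + rewrite Rmult_0_r, Rabs_R0. unfold TB.
          destruct (Z_le_dec m n).
          * destruct (Z_le_dec (m-1) n); [|lia].
            rewrite <- Hs by lia. rewrite hopp, nrms0, Rabs_R0. lra.
          * destruct (Z_le_dec (m-1) n); [lia|].
            rewrite A0, hopp, nrms0, Rabs_R0. lra. }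
    pose proof (Hdom zx x Hinx Hzx Hsx) as D1.
    pose proof (Hdom zy y Hiny Hzy Hsy) as D2.
    destruct hT as [hinj _].
    assert (E := hinj _ _ D1 D2).
    assert (Heq : forall k, TB add opp A (fun m => if Z_le_dec m n then zx m else zero) k
                         = TB add opp A (fun m => if Z_le_dec m n then zy m else zero) k).
    { intro k. unfold TB.
      destruct (Z_le_dec k n).
      - destruct (Z_le_dec (k-1) n); [|lia].
        rewrite <- Hsx by lia. rewrite <- Hsy by lia. rewrite !hopp. reflexivity.
      - destruct (Z_le_dec (k-1) n).
        + assert (k - 1 = n)%Z by lia. rewrite H. rewrite Hzx, Hzy, HA. reflexivity.
        + reflexivity. }
    specialize (E Heq n). simpl in E.
    destruct (Z_le_dec n n); [|lia]. rewrite <- Hzx, <- Hzy. exact E.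
  - intros y [zs [Hin [Hzn Hzs]]].
    exists (zs n). split.
    + exists zs. split; [exact Hin|]. split; [reflexivity|].
      intros m Hm. apply Hzs. lia.
    + rewrite <- Hzn. rewrite (Hzs (n+1)%Z) by lia.
      replace (n+1-1)%Z with n by ring. reflexivity.
Qed.
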